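(* For $w\in\mathbb N$, $\textsc{ReLU}$ networks $f:\mathbb R\to\mathbb R^2$ of width $w$ are dense in $C([0,1],\mathbb{R}^2)$ if and only if $w \ge 3$.
   Context: A neural network $f:\mathbb R^{d_x}\to\mathbb R^{d_y}$ with $L$ layers and hidden dimensions $d_1,\dots,d_{L-1}$ (set $d_0=d_x$, $d_L=d_y$) is a map $f=t_L\circ\sigma_{L-1}\circ\cdots\circ t_2\circ\sigma_1\circ t_1$, where each $t_\ell:\mathbb R^{d_{\ell-1}}\to\mathbb R^{d_\ell}$ is affine and $\sigma_\ell$ applies $\textsc{ReLU}(x)=\max\{x,0\}$ coordinatewise. The width of $f$ is $\max\{d_1,\dots,d_{L-1}\}$; the depth is arbitrary. $C([0,1],\mathbb R^2)$ is endowed with the uniform norm $\|g\|_\infty=\sup_{x\in[0,1]}\|g(x)\|_\infty$, and ''dense'' means: for every $f^*\in C([0,1],\mathbb R^2)$ and every $\varepsilon>0$ there is such a network $f$ with $\sup_{x\in[0,1]}\|f^*(x)-f(x)\|_\infty\le\varepsilon$. *)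

(* Defs.v *)
From Stdlib Require Import Reals List.
Open Scope R_scope.

(* Vectors of dimension d are represented as functions nat -> R of which only
   coordinates 0..d-1 are ever read. *)
Definition vec := nat -> R.

Fixpoint sum_below (n : nat) (f : nat -> R) : R :=
  match n with
  | O => 0
  | S k => sum_below k f + f k
  end.

Definition affine (din : nat) (W : nat -> nat -> R) (b : vec) (x : vec) : vec :=
  fun i => sum_below din (fun j => W i j * x j) + b i.

Definition relu (r : R) : R := Rmax r 0.

(* A layer: (output dimension d_l, weight matrix, bias). *)
Definition layer := (nat * (nat -> nat -> R) * vec)%type.

Fixpoint eval (din : nat) (ls : list layer) (x : vec) : vec :=
  match ls with
  | nil => x
  | (d, W, b) :: nil => affine din W b x
  | (d, W, b) :: rest => eval d rest (fun i => relu (affine din W b x i))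
  end.

Definition layer_dim (l : layer) : nat := fst (fst l).

Definition hidden_dims (ls : list layer) : list nat := map layer_dim (removelast ls).

Definition width (ls : list layer) : nat := fold_right Nat.max O (hidden_dims ls).

Definition net_1_2 (ls : list layer) : Prop :=
  ls <> nil /\ layer_dim (last ls (O, fun _ _ => 0, fun _ => 0)) = 2%nat.

Definition net_fun (ls : list layer) (x : R) : R * R :=
  let y := eval 1 ls (fun _ => x) in (y 0%nat, y 1%nat).

Definition norm_inf (v : R * R) : R := Rmax (Rabs (fst v)) (Rabs (snd v)).

Definition vsub (u v : R * R) : R * R := (fst u - fst v, snd u - snd v).

Definition in01 (x : R) : Prop := 0 <= x <= 1.

(* g : [0,1] -> R^2 continuous (values outside [0,1] are irrelevant) *)
Definition continuous_on01 (g : R -> R * R) : Prop :=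
  forall x, in01 x -> forall eps, eps > 0 -> exists delta, delta > 0 /\
    forall y, in01 y -> Rabs (y - x) < delta -> norm_inf (vsub (g y) (g x)) < eps.

Definition dense_width (w : nat) : Prop :=
  forall g : R -> R * R, continuous_on01 g ->
  forall eps, eps > 0 ->
  exists ls, net_1_2 ls /\ width ls = w /\
    forall x, in01 x -> norm_inf (vsub (g x) (net_fun ls x)) <= eps.

(* Main.v *)
Require Import Defs.
From Stdlib Require Import Reals.
From Stdlib Require Import List Lra Lia ZArith.
Open Scope R_scope.

Lemma relu_pos r : 0 <= r -> relu r = r.
Proof. intros; unfold relu, Rmax; destruct (Rle_dec r 0); lra. Qed.
Lemma relu_neg r : r <= 0 -> relu r = 0.
Proof. intros; unfold relu, Rmax; destruct (Rle_dec r 0); lra. Qed.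
Lemma relu_ge0 r : 0 <= relu r.
Proof. unfold relu, Rmax; destruct (Rle_dec r 0); lra. Qed.
Lemma relu_le r s : r <= s -> relu r <= relu s.
Proof. unfold relu, Rmax; destruct (Rle_dec r 0), (Rle_dec s 0); lra. Qed.
Lemma relu_lip r s : Rabs (relu r - relu s) <= Rabs (r - s).
Proof. unfold relu, Rmax; destruct (Rle_dec r 0), (Rle_dec s 0);
  unfold Rabs; repeat destruct Rcase_abs; lra. Qed.

Section Interp.
Variable n : nat.
Hypothesis Hn : (1 <= n)%nat.
Variable G : nat -> R.

Definition tt (k : nat) : R := INR k / INR n.
Definition slope (k : nat) : R := INR n * (G (S k) - G k).
Definition alpha (k : nat) : R :=
  match k with O => slope O | S k' => slope (S k') - slope k' end.
Fixpoint Lsum (k : nat) (x : R) : R :=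
  match k with O => G O | S k' => Lsum k' x + alpha k' * relu (x - tt k') end.
Fixpoint Asum (k : nat) : R :=
  match k with O => 0 | S k' => Asum k' + Rabs (alpha k') end.

Lemma INRn_pos : 0 < INR n.
Proof. apply lt_0_INR; lia. Qed.

Lemma tt_S k : tt (S k) = tt k + / INR n.
Proof. unfold tt. rewrite S_INR. field. pose proof INRn_pos; lra. Qed.
Lemma tt_0 : tt 0 = 0.
Proof. unfold tt; simpl; field. pose proof INRn_pos; lra. Qed.
Lemma tt_ge0 k : 0 <= tt k.
Proof. unfold tt. pose proof INRn_pos. pose proof (pos_INR k).
  apply Rmult_le_pos; [lra| left; apply Rinv_0_lt_compat; lra]. Qed.
Lemma tt_mono j k : (j <= k)%nat -> tt j <= tt k.
Proof. intros H. unfold tt. pose proof INRn_pos. apply le_INR in H.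
  unfold Rdiv. apply Rmult_le_compat_r; [left; apply Rinv_0_lt_compat; lra| lra]. Qed.
Lemma tt_n : tt n = 1.
Proof. unfold tt. field. pose proof INRn_pos; lra. Qed.

Lemma Lsum_char m : (S m <= n)%nat -> forall x, 0 <= x ->
  (forall j, (j <= m)%nat -> tt j <= x <= tt (S j) ->
     Lsum (S m) x = G j + slope j * (x - tt j)) /\
  (tt m <= x -> Lsum (S m) x = G m + slope m * (x - tt m)).
Proof.
  intros Hm x Hx. pose proof INRn_pos as Hp.
  induction m as [|m IH].
  - simpl. rewrite tt_0. replace (x - 0) with x by ring. rewrite relu_pos by lra.
    split.
    + intros j Hj _. assert (j = O) by lia. subst. simpl. rewrite tt_0. ring.
    + intros _. ring.
  - assert (IH' := IH ltac:(lia)). destruct IH' as [IH1 IH2].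
    assert (Hsec : tt (S m) <= x -> Lsum (S (S m)) x = G (S m) + slope (S m) * (x - tt (S m))).
    { intros Hx2. change (Lsum (S (S m)) x) with (Lsum (S m) x + alpha (S m) * relu (x - tt (S m))).
      rewrite IH2. 2: { pose proof (tt_mono m (S m) ltac:(lia)); lra. }
      rewrite relu_pos by lra. simpl alpha.
      rewrite tt_S in *. unfold slope. field. lra. }
    split; [|exact Hsec].
    intros j Hj Hjx. destruct (Nat.eq_dec j (S m)) as [->|Hne]; [apply Hsec; lra|].
    change (Lsum (S (S m)) x) with (Lsum (S m) x + alpha (S m) * relu (x - tt (S m))).
    rewrite relu_neg. 2: { pose proof (tt_mono (S j) (S m) ltac:(lia)); lra. }
    rewrite Rmult_0_r, Rplus_0_r. apply IH1; [lia|lra].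
Qed.

Lemma Lsum_bound k x : 0 <= x <= 1 -> Rabs (Lsum k x) <= Rabs (G O) + Asum k.
Proof.
  intros Hx. induction k as [|k IH]; simpl.
  - lra.
  - assert (0 <= relu (x - tt k) <= 1).
    { split; [apply relu_ge0|]. pose proof (tt_ge0 k).
      unfold relu, Rmax; destruct Rle_dec; lra. }
    eapply Rle_trans; [apply Rabs_triang|].
    rewrite Rabs_mult. rewrite (Rabs_pos_eq (relu _)) by lra.
    pose proof (Rabs_pos (alpha k)).
    assert (Rabs (alpha k) * relu (x - tt k) <= Rabs (alpha k)) by nra. lra.
Qed.

Lemma Asum_mono j k : (j <= k)%nat -> Asum j <= Asum k.
Proof. induction 1; simpl; [lra|]. pose proof (Rabs_pos (alpha m)); lra. Qed.

Lemma cover x : 0 <= x <= 1 -> exists j, (j < n)%nat /\ tt j <= x <= tt (S j).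
Proof.
  intros Hx.
  assert (H : forall k, (1 <= k)%nat -> x <= tt k -> exists j, (j < k)%nat /\ tt j <= x <= tt (S j)).
  { induction k as [|k IH]; intros Hk Hxk; [lia|].
    destruct (Nat.eq_dec k 0) as [->|Hk0].
    - exists O. rewrite tt_0. split; [lia|lra].
    - destruct (Rle_dec x (tt k)) as [Hle|Hgt].
      + destruct (IH ltac:(lia) Hle) as [j [Hj1 Hj2]]. exists j; split; [lia|lra].
      + exists k; split; [lia|lra]. }
  apply H; [lia|]. rewrite tt_n; lra.
Qed.

Lemma Lsum_approx (f : R -> R) eps :
  (forall j, (j <= n)%nat -> G j = f (tt j)) ->
  (forall j x, (j < n)%nat -> tt j <= x <= tt (S j) -> Rabs (f x - f (tt j)) < eps /\ Rabs (f x - f (tt (S j))) < eps) ->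
  forall x, 0 <= x <= 1 -> Rabs (f x - Lsum n x) <= eps.
Proof.
  intros HG Hc x Hx. destruct (cover x Hx) as [j [Hj Hjx]].
  assert (exists m, n = S m) as [m E] by (exists (pred n); lia).
  replace (Lsum n x) with (Lsum (S m) x) by (rewrite E; reflexivity).
  destruct (Lsum_char m ltac:(lia) x ltac:(lra)) as [H1 _].
  rewrite (H1 j ltac:(lia) Hjx).
  destruct (Hc j x ltac:(lia) Hjx) as [A B].
  rewrite <- !HG in A, B by lia.
  pose proof INRn_pos as Hp.
  assert (Hl : slope j * (x - tt j) = (INR n * (x - tt j)) * (G (S j) - G j)) by (unfold slope; ring).
  rewrite Hl. set (l := INR n * (x - tt j)).
  assert (0 <= l <= 1).
  { unfold l. rewrite tt_S in Hjx. split. nra.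
    assert (INR n * (x - tt j) <= INR n * / INR n) by (apply Rmult_le_compat_l; lra).
    rewrite Rinv_r in H by lra. lra. }
  apply Rabs_def2 in A. apply Rabs_def2 in B. apply Rabs_le. nra.
Qed.
End Interp.

Lemma sum_below3 w f : (3 <= w)%nat -> (forall j, (3 <= j)%nat -> f j = 0) ->
  sum_below w f = f 0%nat + f 1%nat + f 2%nat.
Proof.
  intros Hw Hf. induction Hw as [|w Hw IH].
  - simpl. ring.
  - simpl. rewrite IH, (Hf w) by lia. ring.
Qed.

Lemma eval_cons din d W b rest x : rest <> nil ->
  eval din ((d, W, b) :: rest) x = eval d rest (fun i => relu (affine din W b x i)).
Proof. intros H. destruct rest; [congruence|reflexivity]. Qed.

Section Net.
Variables (w n : nat) (Hw : (3 <= w)%nat) (Hn : (1 <= n)%nat).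
Variables (G1 G2 : nat -> R) (C : R).

Definition first_layer : layer :=
  (w, fun i j => match i with O => 1 | _ => 0 end,
      fun i => match i with O => 0 | 1%nat => C + G1 O | 2%nat => C + G2 O | _ => 0 end).
Definition mid_layer (m : nat) : layer :=
  (w, fun i j => match i, j with
                 | O, O => 1 | 1%nat, O => alpha n G1 m | 1%nat, 1%nat => 1
                 | 2%nat, O => alpha n G2 m | 2%nat, 2%nat => 1 | _, _ => 0 end,
      fun i => match i with O => - / INR n | _ => 0 end).
Definition final_layer : layer :=
  (2%nat, fun i j => match i, j with O, 1%nat => 1 | 1%nat, 2%nat => 1 | _, _ => 0 end,
      fun i => match i with O => - C | 1%nat => - C | _ => 0 end).
Definition the_net : list layer :=
  first_layer :: (map mid_layer (seq 0 n) ++ final_layer :: nil).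

Hypothesis HC1 : forall k x, (k <= n)%nat -> 0 <= x <= 1 -> 0 <= C + Lsum n G1 k x.
Hypothesis HC2 : forall k x, (k <= n)%nat -> 0 <= x <= 1 -> 0 <= C + Lsum n G2 k x.

Definition inv (m : nat) (x : R) (h : vec) : Prop :=
  h O = relu (x - tt n m) /\ h 1%nat = C + Lsum n G1 m x /\ h 2%nat = C + Lsum n G2 m x.

Lemma mids_eval x : 0 <= x <= 1 -> forall k m h, inv m x h -> (m + k = n)%nat ->
  let y := eval w (map mid_layer (seq m k) ++ final_layer :: nil) h in
  y O = Lsum n G1 n x /\ y 1%nat = Lsum n G2 n x.
Proof.
  intros Hx k. induction k as [|k IH]; intros m h [H0 [H1 H2]] Hmk.
  - simpl. unfold affine. rewrite !sum_below3 by (auto; intros [|[|[|j]]] Hj; try lia; ring).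
    rewrite H1, H2. replace m with n by lia. split; ring.
  - simpl (seq m (S k)). simpl (map mid_layer _). rewrite <- app_comm_cons.
    unfold mid_layer at 1. rewrite eval_cons by (destruct k; simpl; congruence).
    apply IH; [|lia]. unfold inv, affine.
    rewrite !sum_below3 by (auto; intros [|[|[|j]]] Hj; try lia; ring).
    rewrite H0, H1, H2. simpl. split; [|split].
    + rewrite tt_S by lia.
      match goal with |- relu ?a = _ => replace a with (relu (x - tt n m) - / INR n) by ring end.
      assert (0 < / INR n) by (apply Rinv_0_lt_compat, INRn_pos; lia).
      destruct (Rle_dec (x - tt n m) 0).
      * rewrite (relu_neg (x - tt n m)), !relu_neg by lra. reflexivity.
      * rewrite (relu_pos (x - tt n m)) by lra. f_equal. ring.
    + rewrite relu_pos; [ring|]. pose proof (HC1 (S m) x ltac:(lia) Hx). simpl in H. lra.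
    + rewrite relu_pos; [ring|]. pose proof (HC2 (S m) x ltac:(lia) Hx). simpl in H. lra.
Qed.

Lemma net_eval x : 0 <= x <= 1 -> net_fun the_net x = (Lsum n G1 n x, Lsum n G2 n x).
Proof.
  intros Hx. unfold net_fun, the_net, first_layer.
  rewrite eval_cons by (destruct n; simpl; congruence).
  destruct (mids_eval x Hx n 0 (fun i => relu (affine 1 (fun i _ => match i with
      | 0%nat => 1 | S _ => 0 end) (fun i => match i with
      | 0%nat => 0 | 1%nat => C + G1 0%nat | 2%nat => C + G2 0%nat | S (S (S _)) => 0 end)
      (fun _ => x) i))) as [A B].
  - unfold inv, affine. simpl. rewrite tt_0 by lia.
    split; [|split]; f_equal; try ring.
    + rewrite relu_pos; [ring|]. pose proof (HC1 0 x ltac:(lia) Hx). simpl in H. lra.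
    + rewrite relu_pos; [ring|]. pose proof (HC2 0 x ltac:(lia) Hx). simpl in H. lra.
  - lia.
  - simpl in A, B. rewrite A, B. reflexivity.
Qed.

Lemma fold_max_const (l : list nat) : (forall a, In a l -> a = w) -> l <> nil ->
  fold_right Nat.max O l = w.
Proof.
  induction l as [|a l IH]; intros H Hn'; [congruence|]. simpl.
  rewrite (H a (or_introl eq_refl)).
  destruct l as [|b l]. { simpl. lia. }
  rewrite IH; [lia| |congruence]. intros c Hc; apply H; right; exact Hc.
Qed.

Lemma the_net_ok : net_1_2 the_net /\ width the_net = w.
Proof.
  split.
  - split; [unfold the_net; congruence|].
    unfold the_net. rewrite app_comm_cons, last_last. reflexivity.
  - unfold width, hidden_dims, the_net. rewrite app_comm_cons, removelast_last.
    apply fold_max_const; [|simpl; congruence].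
    intros a Ha. simpl in Ha. destruct Ha as [<-|Ha]; [reflexivity|].
    rewrite map_map in Ha. apply in_map_iff in Ha. destruct Ha as [m [<- _]]. reflexivity.
Qed.
End Net.

Lemma Rabs_le_inv x a : Rabs x <= a -> -a <= x <= a.
Proof. unfold Rabs; destruct Rcase_abs; lra. Qed.

Definition clamp (x : R) : R := Rmax 0 (Rmin x 1).
Lemma clamp_in x : in01 (clamp x).
Proof. unfold in01, clamp, Rmax, Rmin; repeat destruct Rle_dec; lra. Qed.
Lemma clamp_id x : in01 x -> clamp x = x.
Proof. unfold in01, clamp, Rmax, Rmin; intros; repeat destruct Rle_dec; lra. Qed.
Lemma clamp_lip x y : Rabs (clamp y - clamp x) <= Rabs (y - x).
Proof. unfold clamp, Rmax, Rmin; repeat destruct Rle_dec; unfold Rabs;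
  repeat destruct Rcase_abs; lra. Qed.

Lemma norm_fst u : Rabs (fst u) <= norm_inf u.
Proof. unfold norm_inf; apply Rmax_l. Qed.
Lemma norm_snd u : Rabs (snd u) <= norm_inf u.
Proof. unfold norm_inf; apply Rmax_r. Qed.

Lemma coord_cont (g : R -> R * R) (p : R * R -> R) :
  continuous_on01 g -> (forall u, Rabs (p u) <= norm_inf u) ->
  (forall u v, p (vsub u v) = p u - p v) ->
  forall x, continuity_pt (fun x => p (g (clamp x))) x.
Proof.
  intros Hg Hp Hsub x. unfold continuity_pt, continue_in, limit1_in, limit_in.
  intros e He. destruct (Hg (clamp x) (clamp_in x) e He) as [d [Hd Hd2]].
  exists d; split; [exact Hd|]. intros y [_ Hy]. simpl in *. unfold R_dist in *.
  rewrite <- Hsub. eapply Rle_lt_trans; [apply Hp|]. apply Hd2; [apply clamp_in|].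
  eapply Rle_lt_trans; [apply clamp_lip|exact Hy].
Qed.

Lemma upper w : (3 <= w)%nat -> dense_width w.
Proof.
  intros Hw g Hg eps Heps.
  set (f1 := fun x => fst (g (clamp x))). set (f2 := fun x => snd (g (clamp x))).
  assert (U1 := Heine f1 (fun c => 0 <= c <= 1) (compact_P3 0 1)
     (fun x _ => coord_cont g fst Hg norm_fst (fun u v => eq_refl) x)).
  assert (U2 := Heine f2 (fun c => 0 <= c <= 1) (compact_P3 0 1)
     (fun x _ => coord_cont g snd Hg norm_snd (fun u v => eq_refl) x)).
  destruct (U1 (mkposreal eps Heps)) as [d1 Hd1].
  destruct (U2 (mkposreal eps Heps)) as [d2 Hd2]. simpl in Hd1, Hd2.
  set (d := Rmin d1 d2).
  assert (Hdpos : 0 < d) by (unfold d, Rmin; pose proof (cond_pos d1); pose proof (cond_pos d2); destruct Rle_dec; lra).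
  destruct (INR_unbounded (/ d)) as [n Hn].
  assert (Hn1 : (1 <= n)%nat).
  { destruct n; [simpl in Hn; pose proof (Rinv_0_lt_compat d Hdpos); lra | lia]. }
  assert (Hnp : 0 < INR n) by (apply lt_0_INR; lia).
  assert (Hinv : / INR n < d).
  { apply Rinv_lt_contravar in Hn; [|apply Rmult_lt_0_compat; [apply Rinv_0_lt_compat|]; lra].
    rewrite Rinv_inv in Hn. exact Hn. }
  set (G1 := fun k => f1 (tt n k)). set (G2 := fun k => f2 (tt n k)).
  set (C := 1 + Rabs (G1 O) + Asum n G1 n + Rabs (G2 O) + Asum n G2 n).
  assert (HA1 := fun k => Asum_mono n G1 k n). assert (HA2 := fun k => Asum_mono n G2 k n).
  assert (P1 : forall k, 0 <= Asum n G1 k).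
  { induction k; simpl; [lra|]. pose proof (Rabs_pos (alpha n G1 k)); lra. }
  assert (P2 : forall k, 0 <= Asum n G2 k).
  { induction k; simpl; [lra|]. pose proof (Rabs_pos (alpha n G2 k)); lra. }
  assert (HC1 : forall k x, (k <= n)%nat -> 0 <= x <= 1 -> 0 <= C + Lsum n G1 k x).
  { intros k x Hk Hx. pose proof (Lsum_bound n Hn1 G1 k x Hx). pose proof (HA1 k Hk).
    pose proof (Rabs_pos (G2 O)). pose proof (P2 n).
    apply Rabs_le_inv in H. unfold C. lra. }
  assert (HC2 : forall k x, (k <= n)%nat -> 0 <= x <= 1 -> 0 <= C + Lsum n G2 k x).
  { intros k x Hk Hx. pose proof (Lsum_bound n Hn1 G2 k x Hx). pose proof (HA2 k Hk).
    pose proof (Rabs_pos (G1 O)). pose proof (P1 n).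
    apply Rabs_le_inv in H. unfold C. lra. }
  exists (the_net w n G1 G2 C).
  destruct (the_net_ok w n Hw Hn1 G1 G2 C) as [Hok Hwid].
  split; [exact Hok|split; [exact Hwid|]].
  intros x Hx. rewrite (net_eval w n Hw Hn1 G1 G2 C HC1 HC2 x Hx).
  assert (Hclose : forall (f : R -> R), (forall x y, 0 <= x <= 1 -> 0 <= y <= 1 ->
       Rabs (x - y) < d -> Rabs (f x - f y) < eps) ->
     forall j x, (j < n)%nat -> tt n j <= x <= tt n (S j) ->
     Rabs (f x - f (tt n j)) < eps /\ Rabs (f x - f (tt n (S j))) < eps).
  { intros f Hf j y Hj Hy. pose proof (tt_ge0 n Hn1 j). pose proof (tt_mono n Hn1 (S j) n ltac:(lia)).
    rewrite tt_n in H0 by lia. rewrite tt_S in * by lia.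
    split; apply Hf; try lra; apply Rabs_def1; lra. }
  assert (E1 : Rabs (f1 x - Lsum n G1 n x) <= eps).
  { apply (Lsum_approx n Hn1 G1 f1 eps); [reflexivity| |exact Hx].
    apply Hclose. intros a b Ha Hb Hab. apply Hd1; auto. unfold d in Hab.
    pose proof (Rmin_l d1 d2); lra. }
  assert (E2 : Rabs (f2 x - Lsum n G2 n x) <= eps).
  { apply (Lsum_approx n Hn1 G2 f2 eps); [reflexivity| |exact Hx].
    apply Hclose. intros a b Ha Hb Hab. apply Hd2; auto. unfold d in Hab.
    pose proof (Rmin_r d1 d2); lra. }
  unfold f1, f2 in E1, E2. rewrite clamp_id in E1, E2 by exact Hx.
  unfold norm_inf, vsub. simpl. apply Rmax_lub; assumption.
Qed.

Definition vadd (u v : R * R) : R * R := (fst u + fst v, snd u + snd v).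

Lemma norm_ge0 u : 0 <= norm_inf u.
Proof. eapply Rle_trans; [apply Rabs_pos|apply norm_fst]. Qed.
Lemma norm_le u c : Rabs (fst u) <= c -> Rabs (snd u) <= c -> norm_inf u <= c.
Proof. intros; unfold norm_inf; apply Rmax_lub; auto. Qed.
Lemma norm_triang u v : norm_inf (vadd u v) <= norm_inf u + norm_inf v.
Proof.
  apply norm_le; simpl; (eapply Rle_trans; [apply Rabs_triang|]);
  pose proof (norm_fst u); pose proof (norm_snd u); pose proof (norm_fst v); pose proof (norm_snd v); lra.
Qed.
Lemma norm_sub_triang u v : norm_inf (vsub u v) <= norm_inf u + norm_inf v.
Proof.
  apply norm_le; simpl; (eapply Rle_trans; [apply Rabs_triang|]); rewrite Rabs_Ropp;
  pose proof (norm_fst u); pose proof (norm_snd u); pose proof (norm_fst v); pose proof (norm_snd v); lra.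
Qed.
Lemma norm_sub_sym u v : norm_inf (vsub u v) = norm_inf (vsub v u).
Proof. unfold norm_inf, vsub; simpl. rewrite (Rabs_minus_sym (fst u)), (Rabs_minus_sym (snd u)). reflexivity. Qed.

Record mat := Mat { m00 : R; m01 : R; m10 : R; m11 : R }.
Definition mapp (M : mat) (u : R * R) : R * R :=
  (m00 M * fst u + m01 M * snd u, m10 M * fst u + m11 M * snd u).
Definition msum (M : mat) : R := Rabs (m00 M) + Rabs (m01 M) + Rabs (m10 M) + Rabs (m11 M).
Definition mdet (M : mat) : R := m00 M * m11 M - m01 M * m10 M.

Lemma msum_ge0 M : 0 <= msum M.
Proof. unfold msum; pose proof (Rabs_pos (m00 M)); pose proof (Rabs_pos (m01 M));
  pose proof (Rabs_pos (m10 M)); pose proof (Rabs_pos (m11 M)); lra. Qed.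

Lemma lin2 a b x y n : Rabs x <= n -> Rabs y <= n -> Rabs (a * x + b * y) <= (Rabs a + Rabs b) * n.
Proof.
  intros Hx Hy. eapply Rle_trans; [apply Rabs_triang|]. rewrite !Rabs_mult.
  pose proof (Rabs_pos a); pose proof (Rabs_pos b).
  assert (Rabs a * Rabs x <= Rabs a * n) by (apply Rmult_le_compat_l; auto).
  assert (Rabs b * Rabs y <= Rabs b * n) by (apply Rmult_le_compat_l; auto). lra.
Qed.

Lemma mapp_bound M u : norm_inf (mapp M u) <= msum M * norm_inf u.
Proof.
  pose proof (norm_fst u); pose proof (norm_snd u); pose proof (norm_ge0 u).
  pose proof (Rabs_pos (m00 M)); pose proof (Rabs_pos (m01 M));
  pose proof (Rabs_pos (m10 M)); pose proof (Rabs_pos (m11 M)).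
  apply norm_le; simpl.
  - eapply Rle_trans; [apply lin2; eauto|]. unfold msum. nra.
  - eapply Rle_trans; [apply lin2; eauto|]. unfold msum. nra.
Qed.

Lemma mapp_lower M u : Rabs (mdet M) * norm_inf u <= msum M * norm_inf (mapp M u).
Proof.
  set (X := fst (mapp M u)). set (Y := snd (mapp M u)).
  pose proof (norm_fst (mapp M u)) as HX. pose proof (norm_snd (mapp M u)) as HY.
  fold X in HX. fold Y in HY.
  pose proof (Rabs_pos (m00 M)); pose proof (Rabs_pos (m01 M));
  pose proof (Rabs_pos (m10 M)); pose proof (Rabs_pos (m11 M)).
  pose proof (norm_ge0 (mapp M u)).
  assert (E1 : mdet M * fst u = m11 M * X + (- m01 M) * Y) by (unfold X, Y, mdet, mapp; simpl; ring).
  assert (E2 : mdet M * snd u = (- m10 M) * X + m00 M * Y) by (unfold X, Y, mdet, mapp; simpl; ring).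
  assert (B1 : Rabs (mdet M) * Rabs (fst u) <= msum M * norm_inf (mapp M u)).
  { rewrite <- Rabs_mult, E1. eapply Rle_trans; [apply lin2; eauto|].
    rewrite Rabs_Ropp. unfold msum. nra. }
  assert (B2 : Rabs (mdet M) * Rabs (snd u) <= msum M * norm_inf (mapp M u)).
  { rewrite <- Rabs_mult, E2. eapply Rle_trans; [apply lin2; eauto|].
    rewrite Rabs_Ropp. unfold msum. nra. }
  unfold norm_inf at 1, Rmax. destruct Rle_dec; assumption.
Qed.

Lemma mapp_sub M u v : vsub (mapp M u) (mapp M v) = mapp M (vsub u v).
Proof. unfold vsub, mapp; simpl; f_equal; ring. Qed.

Definition rho (a r : R) : R := Rmax r (a * r).
Definition rho2 (a : R) (u : R * R) : R * R := (rho a (fst u), rho a (snd u)).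

Lemma rho_lip a r s : 0 <= a <= 1 -> Rabs (rho a r - rho a s) <= Rabs (r - s).
Proof.
  intros Ha. unfold rho, Rmax. destruct (Rle_dec r (a*r)), (Rle_dec s (a*s));
  unfold Rabs; repeat destruct Rcase_abs; nra.
Qed.
Lemma rho_low a r s : 0 <= a <= 1 -> a * Rabs (r - s) <= Rabs (rho a r - rho a s).
Proof.
  intros Ha. unfold rho, Rmax. destruct (Rle_dec r (a*r)), (Rle_dec s (a*s));
  unfold Rabs; repeat destruct Rcase_abs; nra.
Qed.
Lemma rho_abs a s : 0 <= a <= 1 -> Rabs (rho a s) <= Rabs s.
Proof.
  intros Ha. unfold rho, Rmax. destruct (Rle_dec s (a*s));
  unfold Rabs; repeat destruct Rcase_abs; nra.
Qed.
Lemma rho_0a a r s : 0 <= a <= 1 -> Rabs (rho 0 r - rho a s) <= Rabs (r - s) + a * Rabs s.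
Proof.
  intros Ha. unfold rho, Rmax. rewrite !Rmult_0_l.
  destruct (Rle_dec r 0), (Rle_dec s (a*s));
  unfold Rabs; repeat destruct Rcase_abs; nra.
Qed.
Lemma rho_relu r : rho 0 r = relu r.
Proof. unfold rho, relu. rewrite Rmult_0_l. reflexivity. Qed.

Definition lay2 := (mat * (R * R))%type.
Definition step (a : R) (Mb : lay2) (u : R * R) : R * R :=
  vadd (mapp (fst Mb) (rho2 a u)) (snd Mb).
Fixpoint chain (a : R) (Ms : list lay2) (u : R * R) : R * R :=
  match Ms with nil => u | Mb :: Ms' => chain a Ms' (step a Mb u) end.

Lemma rho2_norm a u : 0 <= a <= 1 -> norm_inf (rho2 a u) <= norm_inf u.
Proof.
  intros Ha. apply norm_le; simpl; (eapply Rle_trans; [apply rho_abs; auto|]);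
  [apply norm_fst|apply norm_snd].
Qed.
Lemma rho2_lip a u v : 0 <= a <= 1 -> norm_inf (vsub (rho2 a u) (rho2 a v)) <= norm_inf (vsub u v).
Proof.
  intros Ha. apply norm_le; simpl; (eapply Rle_trans; [apply rho_lip; auto|]);
  [apply (norm_fst (vsub u v))|apply (norm_snd (vsub u v))].
Qed.
Lemma rho2_low a u v : 0 <= a <= 1 -> a * norm_inf (vsub u v) <= norm_inf (vsub (rho2 a u) (rho2 a v)).
Proof.
  intros Ha. unfold norm_inf at 1, Rmax. destruct Rle_dec; simpl;
  (eapply Rle_trans; [apply rho_low; auto|]);
  [apply (norm_snd (vsub (rho2 a u) (rho2 a v)))|apply (norm_fst (vsub (rho2 a u) (rho2 a v)))].
Qed.
Lemma rho2_0a a u v : 0 <= a <= 1 ->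
  norm_inf (vsub (rho2 0 u) (rho2 a v)) <= norm_inf (vsub u v) + a * norm_inf v.
Proof.
  intros Ha. pose proof (norm_fst (vsub u v)); pose proof (norm_snd (vsub u v));
  pose proof (norm_fst v); pose proof (norm_snd v).
  apply norm_le; simpl; (eapply Rle_trans; [apply rho_0a; auto|]); simpl in *; nra.
Qed.

Definition mdiff (M M' : mat) : mat :=
  Mat (m00 M - m00 M') (m01 M - m01 M') (m10 M - m10 M') (m11 M - m11 M').

Definition close (th : R) (Mb Mb' : lay2) : Prop :=
  let M := fst Mb in let M' := fst Mb' in
  Rabs (m00 M - m00 M') <= th /\ Rabs (m01 M - m01 M') <= th /\
  Rabs (m10 M - m10 M') <= th /\ Rabs (m11 M - m11 M') <= th /\
  norm_inf (vsub (snd Mb) (snd Mb')) <= th.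

Lemma close_mono th th' Mb Mb' : th <= th' -> close th Mb Mb' -> close th' Mb Mb'.
Proof. unfold close; intros; lra. Qed.

Lemma step_err a th Mb Mb' u v R0 : 0 <= a <= th -> th <= 1 -> close th Mb Mb' ->
  norm_inf u <= R0 -> norm_inf (vsub u v) <= th ->
  norm_inf (vsub (step 0 Mb u) (step a Mb' v)) <=
    th * (msum (fst Mb) * (Rabs R0 + 2) + 4 * (Rabs R0 + 1) + 1).
Proof.
  intros Ha Hth Hc Hu Huv. destruct Mb as [M b], Mb' as [M' b']. unfold close in Hc; simpl in Hc.
  destruct Hc as [H1 [H2 [H3 [H4 H5]]]].
  unfold step; simpl.
  set (w0 := rho2 0 u). set (wa := rho2 a v).
  assert (E : vsub (vadd (mapp M w0) b) (vadd (mapp M' wa) b') =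
     vadd (vadd (mapp M (vsub w0 wa)) (mapp (mdiff M M') wa)) (vsub b b')).
  { unfold vsub, vadd, mapp, mdiff; simpl; f_equal; ring. }
  rewrite E.
  assert (Hv : norm_inf v <= Rabs R0 + 1).
  { replace v with (vsub u (vsub u v)) by (unfold vsub; destruct u, v; simpl; f_equal; ring).
    pose proof (norm_sub_triang u (vsub u v)). pose proof (Rle_abs R0). lra. }
  assert (Hwa : norm_inf wa <= Rabs R0 + 1).
  { eapply Rle_trans; [apply rho2_norm|exact Hv]. lra. }
  assert (Hd : norm_inf (vsub w0 wa) <= th + th * (Rabs R0 + 1)).
  { eapply Rle_trans; [apply rho2_0a; lra|]. pose proof (norm_ge0 v). nra. }
  assert (Hm : msum (mdiff M M') <= 4 * th) by (unfold msum, mdiff; simpl; lra).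
  pose proof (mapp_bound M (vsub w0 wa)). pose proof (mapp_bound (mdiff M M') wa).
  pose proof (msum_ge0 M). pose proof (msum_ge0 (mdiff M M')). pose proof (norm_ge0 wa).
  pose proof (norm_ge0 (vsub w0 wa)). pose proof (Rabs_pos R0).
  eapply Rle_trans; [apply norm_triang|].
  eapply Rle_trans; [apply Rplus_le_compat_r, norm_triang|].
  assert (msum M * norm_inf (vsub w0 wa) <= msum M * (th + th * (Rabs R0 + 1))) by (apply Rmult_le_compat_l; lra).
  assert (msum (mdiff M M') * norm_inf wa <= 4 * th * (Rabs R0 + 1)) by nra.
  nra.
Qed.

Lemma step_bound Mb u R0 : norm_inf u <= R0 ->
  norm_inf (step 0 Mb u) <= msum (fst Mb) * R0 + norm_inf (snd Mb).
Proof.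
  intros Hu. unfold step. eapply Rle_trans; [apply norm_triang|].
  pose proof (mapp_bound (fst Mb) (rho2 0 u)). pose proof (rho2_norm 0 u ltac:(lra)).
  pose proof (msum_ge0 (fst Mb)).
  assert (msum (fst Mb) * norm_inf (rho2 0 u) <= msum (fst Mb) * R0) by (apply Rmult_le_compat_l; lra).
  lra.
Qed.

Lemma chain_approx Ms : forall R0 eta, 0 < eta -> exists th, 0 < th <= 1 /\
  forall a Ms' u v, 0 <= a <= th -> Forall2 (close th) Ms Ms' ->
  norm_inf u <= R0 -> norm_inf (vsub u v) <= th ->
  norm_inf (vsub (chain 0 Ms u) (chain a Ms' v)) <= eta.
Proof.
  induction Ms as [|Mb Ms IH]; intros R0 eta Heta.
  - exists (Rmin 1 eta). split; [unfold Rmin; destruct Rle_dec; lra|].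
    intros a Ms' u v Ha HF Hu Huv. inversion HF; subst. simpl.
    pose proof (Rmin_r 1 eta). lra.
  - destruct (IH (msum (fst Mb) * R0 + norm_inf (snd Mb)) eta Heta) as [th' [Hth' IH']].
    set (K := msum (fst Mb) * (Rabs R0 + 2) + 4 * (Rabs R0 + 1) + 1).
    assert (HK : 1 <= K) by (unfold K; pose proof (msum_ge0 (fst Mb)); pose proof (Rabs_pos R0); nra).
    exists (th' / K). assert (Hpos : 0 < th' / K) by (apply Rdiv_lt_0_compat; lra).
    assert (Hle : th' / K <= th').
    { unfold Rdiv. rewrite <- (Rmult_1_r th') at 2. apply Rmult_le_compat_l; [lra|].
      rewrite <- Rinv_1. apply Rinv_le_contravar; lra. }
    split; [lra|].
    intros a Ms' u v Ha HF Hu Huv. inversion HF as [|Mb0 Mb' Ms0 Ms'' Hc HF']; subst.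
    simpl. apply IH'.
    + lra.
    + eapply Forall2_impl; [|exact HF']. intros; eapply close_mono; eauto.
    + apply step_bound; exact Hu.
    + eapply Rle_trans; [eapply step_err; eauto; lra|].
      fold K. unfold Rdiv. rewrite Rmult_assoc, Rinv_l by lra. lra.
Qed.

Definition invl (Mb : lay2) : Prop := mdet (fst Mb) <> 0.

Lemma abs0 x : Rabs x = 0 -> x = 0.
Proof. intros H. destruct (Req_dec x 0) as [E|E]; auto. apply Rabs_no_R0 in E. contradiction. Qed.

Lemma msum_pos M : mdet M <> 0 -> 0 < msum M.
Proof.
  intros H. pose proof (msum_ge0 M). destruct (Req_dec (msum M) 0) as [E|E]; [|lra].
  exfalso. apply H. unfold msum in E.
  pose proof (Rabs_pos (m00 M)); pose proof (Rabs_pos (m01 M));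
  pose proof (Rabs_pos (m10 M)); pose proof (Rabs_pos (m11 M)).
  assert (Z1 : Rabs (m00 M) = 0) by lra. assert (Z2 : Rabs (m01 M) = 0) by lra.
  apply abs0 in Z1. apply abs0 in Z2. unfold mdet. rewrite Z1, Z2. ring.
Qed.

Lemma chain_bilip a Ms : 0 < a <= 1 -> Forall invl Ms -> exists k L, 0 < k /\ 0 <= L /\
  forall u v, k * norm_inf (vsub u v) <= norm_inf (vsub (chain a Ms u) (chain a Ms v)) /\
              norm_inf (vsub (chain a Ms u) (chain a Ms v)) <= L * norm_inf (vsub u v).
Proof.
  intros Ha HF. induction HF as [|[M b] Ms HM HF IH].
  - exists 1, 1. split; [lra|]. split; [lra|]. intros; simpl; lra.
  - destruct IH as [k [L [Hk [HL IH]]]]. unfold invl in HM; simpl in HM.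
    pose proof (msum_pos M HM) as HS. pose proof (Rabs_pos_lt _ HM) as HD.
    exists (k * (Rabs (mdet M) / msum M * a)), (L * msum M).
    split. { apply Rmult_lt_0_compat; [lra|]. apply Rmult_lt_0_compat; [|lra]. apply Rdiv_lt_0_compat; lra. }
    split. { apply Rmult_le_pos; lra. }
    intros u v. simpl. destruct (IH (step a (M, b) u) (step a (M, b) v)) as [I1 I2].
    assert (E : vsub (step a (M, b) u) (step a (M, b) v) = mapp M (vsub (rho2 a u) (rho2 a v))).
    { unfold step, vsub, vadd, mapp, rho2; simpl; f_equal; ring. }
    rewrite E in I1, I2.
    pose proof (mapp_lower M (vsub (rho2 a u) (rho2 a v))).
    pose proof (mapp_bound M (vsub (rho2 a u) (rho2 a v))).
    pose proof (rho2_low a u v ltac:(lra)). pose proof (rho2_lip a u v ltac:(lra)).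
    pose proof (norm_ge0 (vsub u v)). pose proof (norm_ge0 (vsub (rho2 a u) (rho2 a v))).
    pose proof (norm_ge0 (mapp M (vsub (rho2 a u) (rho2 a v)))).
    split.
    + eapply Rle_trans; [|exact I1]. rewrite Rmult_assoc. apply Rmult_le_compat_l; [lra|].
      apply (Rmult_le_reg_l (msum M)); [lra|].
      replace (msum M * (Rabs (mdet M) / msum M * a * norm_inf (vsub u v)))
        with (Rabs (mdet M) * (a * norm_inf (vsub u v))) by (field; lra).
      eapply Rle_trans; [|exact H]. apply Rmult_le_compat_l; lra.
    + eapply Rle_trans; [exact I2|]. rewrite Rmult_assoc. apply Rmult_le_compat_l; [lra|].
      eapply Rle_trans; [exact H0|]. apply Rmult_le_compat_l; lra.
Qed.

Definition pertM (M : mat) (d : R) : mat := Mat (m00 M + d) (m01 M) (m10 M) (m11 M + d).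

Lemma det_choice M th : 0 < th -> exists d, 0 < d <= th /\ mdet (pertM M d) <> 0.
Proof.
  intros Hth. unfold mdet, pertM; simpl.
  set (p := m00 M); set (q := m01 M); set (r := m10 M); set (s := m11 M).
  destruct (Req_dec ((p + th) * (s + th) - q * r) 0) as [E1|E1]; [|exists th; split; [lra|exact E1]].
  destruct (Req_dec ((p + th/2) * (s + th/2) - q * r) 0) as [E2|E2]; [|exists (th/2); split; [lra|exact E2]].
  destruct (Req_dec ((p + th/3) * (s + th/3) - q * r) 0) as [E3|E3]; [|exists (th/3); split; [lra|exact E3]].
  exfalso.
  assert (A : th * (3/4 * th + (p + s) / 2) = 0) by lra.
  assert (B : th * (8/9 * th + (p + s) * 2 / 3) = 0) by lra.
  apply Rmult_integral in A. apply Rmult_integral in B.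
  destruct A as [A|A]; [lra|]. destruct B as [B|B]; [lra|]. lra.
Qed.

Lemma perturb Ms th : 0 < th -> exists Ms', Forall2 (close th) Ms Ms' /\ Forall invl Ms'.
Proof.
  intros Hth. induction Ms as [|[M b] Ms IH].
  - exists nil; split; constructor.
  - destruct IH as [Ms' [H1 H2]]. destruct (det_choice M th Hth) as [d [Hd Hdet]].
    exists ((pertM M d, b) :: Ms'). split; constructor; auto.
    unfold close, pertM; simpl.
    replace (m00 M - (m00 M + d)) with (- d) by ring. replace (m11 M - (m11 M + d)) with (- d) by ring.
    rewrite !Rminus_diag, Rabs_R0, Rabs_Ropp, Rabs_pos_eq by lra.
    unfold vsub. rewrite !Rminus_diag. unfold norm_inf; simpl. rewrite Rabs_R0, Rmax_left; lra.
Qed.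

Definition padW (din : nat) (W : nat -> nat -> R) (i j : nat) : R :=
  if Nat.ltb j din then W i j else 0.
Definition pad (din : nat) (W : nat -> nat -> R) (b : vec) : lay2 :=
  (Mat (padW din W 0 0) (padW din W 0 1) (padW din W 1 0) (padW din W 1 1), (b 0%nat, b 1%nat)).
Fixpoint conv (din : nat) (ls : list layer) : list lay2 :=
  match ls with
  | nil => nil
  | (d, W, b) :: rest => pad din W b :: conv d rest
  end.

Lemma sum2 din W i y : (din <= 2)%nat ->
  sum_below din (fun j => W i j * y j) = padW din W i 0 * y 0%nat + padW din W i 1 * y 1%nat.
Proof.
  intros H. unfold padW. destruct din as [|[|[|din]]]; try lia; simpl; ring.
Qed.

Lemma step_pad din W b u : (din <= 2)%nat ->
  step 0 (pad din W b) (u 0%nat, u 1%nat) =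
  (affine din W b (fun i => relu (u i)) 0%nat, affine din W b (fun i => relu (u i)) 1%nat).
Proof.
  intros H. unfold step, pad, affine, vadd, mapp, rho2; simpl. rewrite !sum2 by exact H.
  rewrite !rho_relu. reflexivity.
Qed.

Lemma removelast_cons {A} (a : A) l : l <> nil -> removelast (a :: l) = a :: removelast l.
Proof. destruct l; [congruence|reflexivity]. Qed.

Lemma eval_chain rest : forall din u, rest <> nil -> (din <= 2)%nat ->
  (forall a, In a (map layer_dim (removelast rest)) -> (a <= 2)%nat) ->
  (eval din rest (fun i => relu (u i)) 0%nat, eval din rest (fun i => relu (u i)) 1%nat)
    = chain 0 (conv din rest) (u 0%nat, u 1%nat).
Proof.
  induction rest as [|[[d W] b] rest IH]; intros din u Hne Hd Hall; [congruence|].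
  destruct rest as [|l2 rest'].
  - simpl. rewrite step_pad by exact Hd. reflexivity.
  - rewrite eval_cons by congruence. simpl conv. simpl chain.
    rewrite removelast_cons in Hall by congruence. simpl in Hall.
    assert (Hd' : (d <= 2)%nat) by (apply Hall; left; reflexivity).
    rewrite step_pad by exact Hd.
    apply (IH d (affine din W b (fun i => relu (u i)))); [congruence|exact Hd'|].
    intros a Ha; apply Hall; right; exact Ha.
Qed.

Lemma in_fold_max a l : In a l -> (a <= fold_right Nat.max O l)%nat.
Proof. induction l as [|x l IH]; simpl; [tauto|]. intros [->|H]; [lia|]. specialize (IH H); lia. Qed.

Lemma net_chain ls : net_1_2 ls -> (width ls <= 2)%nat ->
  exists c e Ms, forall x, net_fun ls x = chain 0 Ms (fst c * x + fst e, snd c * x + snd e).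
Proof.
  intros [Hne _] Hw. destruct ls as [|[[d1 W1] b1] rest]; [congruence|].
  exists (W1 0%nat 0%nat, W1 1%nat 0%nat), (b1 0%nat, b1 1%nat).
  destruct rest as [|l2 rest'].
  - exists nil. intros x. unfold net_fun. simpl. unfold affine. simpl. f_equal; ring.
  - exists (conv d1 (l2 :: rest')). intros x. unfold net_fun.
    unfold width, hidden_dims in Hw. rewrite removelast_cons in Hw by congruence.
    assert (Hall : forall a, In a (map layer_dim (removelast ((d1, W1, b1) :: l2 :: rest'))) -> (a <= 2)%nat).
    { intros a Ha. rewrite removelast_cons in Ha by congruence.
      exact (Nat.le_trans _ _ _ (in_fold_max a _ Ha) Hw). }
    rewrite removelast_cons in Hall by congruence. simpl in Hall.
    rewrite eval_cons by congruence.
    rewrite (eval_chain (l2 :: rest') d1 (affine 1 W1 b1 (fun _ => x))); [|congruence| |].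
    + unfold affine; simpl. f_equal; f_equal; ring.
    + apply Hall; left; reflexivity.
    + intros a Ha; apply Hall; right; exact Ha.
Qed.

Inductive quad := Q0 | Q1 | Q2 | Q3.
Definition q (u : R * R) : quad :=
  if Rlt_dec 0 (fst u) then (if Rle_dec 0 (snd u) then Q0 else Q3)
  else if Rlt_dec 0 (snd u) then Q1 else if Rlt_dec (fst u) 0 then Q2 else Q3.

Definition oppb (a b : quad) : bool :=
  match a, b with Q0, Q2 | Q2, Q0 | Q1, Q3 | Q3, Q1 => true | _, _ => false end.
Definition dq (a b : quad) : Z :=
  match a, b with
  | Q0, Q1 | Q1, Q2 | Q2, Q3 | Q3, Q0 => 1%Z
  | Q1, Q0 | Q2, Q1 | Q3, Q2 | Q0, Q3 => (-1)%Z
  | _, _ => 0%Z end.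

Lemma q_spec u :
  (q u = Q0 -> 0 <= fst u /\ 0 <= snd u) /\ (q u = Q1 -> fst u <= 0 /\ 0 <= snd u) /\
  (q u = Q2 -> fst u <= 0 /\ snd u <= 0) /\ (q u = Q3 -> 0 <= fst u /\ snd u <= 0).
Proof. unfold q; repeat destruct Rlt_dec; repeat destruct Rle_dec; repeat split; intros; try discriminate; lra. Qed.

Lemma q_corner u : (fst u < 0 -> 0 < snd u -> q u = Q1) /\ (0 < fst u -> 0 < snd u -> q u = Q0) /\
  (fst u < 0 -> snd u < 0 -> q u = Q2) /\ (0 < fst u -> snd u < 0 -> q u = Q3).
Proof. unfold q; repeat destruct Rlt_dec; repeat destruct Rle_dec; repeat split; intros; try reflexivity; lra. Qed.

Lemma q_side u : (0 < snd u -> q u = Q0 \/ q u = Q1) /\ (snd u < 0 -> q u = Q2 \/ q u = Q3) /\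
  (0 < fst u -> q u = Q0 \/ q u = Q3) /\ (fst u < 0 -> q u = Q1 \/ q u = Q2).
Proof. unfold q; repeat destruct Rlt_dec; repeat destruct Rle_dec; repeat split; intros; auto; lra. Qed.

Lemma abs_small a b m : 0 <= a -> b <= 0 -> Rabs (a - b) < m -> Rabs a < m.
Proof. intros. rewrite Rabs_pos_eq by lra. unfold Rabs in H1; destruct Rcase_abs; lra. Qed.
Lemma abs_small' a b m : a <= 0 -> 0 <= b -> Rabs (a - b) < m -> Rabs a < m.
Proof. intros. rewrite Rabs_left1 by lra. unfold Rabs in H1; destruct Rcase_abs; lra. Qed.

Lemma nonopp m u v : norm_inf (vsub u v) < m -> m <= norm_inf u -> oppb (q u) (q v) = false.
Proof.
  intros Huv Hu. pose proof (norm_fst (vsub u v)) as F. pose proof (norm_snd (vsub u v)) as S.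
  simpl in F, S. destruct (q_spec u) as [A0 [A1 [A2 A3]]]. destruct (q_spec v) as [B0 [B1 [B2 B3]]].
  destruct (q u) eqn:Eu, (q v) eqn:Ev; try reflexivity; exfalso.
  all: first [destruct (A0 eq_refl), (B2 eq_refl) | destruct (A1 eq_refl), (B3 eq_refl)
        |destruct (A2 eq_refl), (B0 eq_refl) | destruct (A3 eq_refl), (B1 eq_refl)];
  (assert (Rabs (fst u) < m) by (first [apply (abs_small _ (fst v)); lra | apply (abs_small' _ (fst v)); lra]));
  (assert (Rabs (snd u) < m) by (first [apply (abs_small _ (snd v)); lra | apply (abs_small' _ (snd v)); lra]));
  unfold norm_inf, Rmax in Hu; destruct Rle_dec; lra.
Qed.

Lemma cell a b c e : oppb a b = false -> oppb b c = false -> oppb a e = false ->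
  oppb e c = false -> oppb a c = false -> oppb b e = false ->
  (dq a b + dq b c = dq a e + dq e c)%Z.
Proof. destruct a, b, c, e; simpl; intros; try discriminate; reflexivity. Qed.

Fixpoint zsum (n : nat) (f : nat -> Z) : Z :=
  match n with O => 0%Z | S k => (zsum k f + f k)%Z end.

Lemma zsum_ext n f g : (forall i, (i < n)%nat -> f i = g i) -> zsum n f = zsum n g.
Proof. induction n; simpl; intros H; [reflexivity|]. rewrite IHn by (intros; apply H; lia). rewrite H by lia. reflexivity. Qed.
Lemma zsum_plus n f g : zsum n (fun i => (f i + g i)%Z) = (zsum n f + zsum n g)%Z.
Proof. induction n; simpl; [reflexivity|]. rewrite IHn. ring. Qed.
Lemma zsum_shift n f : zsum n (fun i => f (S i)) = (zsum n f - f O + f n)%Z.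
Proof. induction n; simpl; [ring|]. rewrite IHn. ring. Qed.
Lemma zsum_tele n f (phi : nat -> Z) : (forall i, (i < n)%nat -> f i = (phi (S i) - phi i)%Z) ->
  zsum n f = (phi n - phi O)%Z.
Proof. induction n; simpl; intros H; [ring|]. rewrite IHn by (intros; apply H; lia). rewrite H by lia. ring. Qed.

Lemma side_sum n (f : nat -> quad) (phi : quad -> Z) a0 a1 :
  (forall i, (i <= n)%nat -> f i = a0 \/ f i = a1) ->
  (forall a b, (a = a0 \/ a = a1) -> (b = a0 \/ b = a1) -> dq a b = (phi b - phi a)%Z) ->
  zsum n (fun i => dq (f i) (f (S i))) = (phi (f n) - phi (f O))%Z.
Proof.
  intros H1 H2. apply (zsum_tele n _ (fun i => phi (f i))). intros i Hi.
  apply H2; apply H1; lia.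
Qed.

Lemma discrete (N : nat) (P : nat -> nat -> R * R) : (1 <= N)%nat ->
  (forall i j i' j', (i <= N)%nat -> (j <= N)%nat -> (i' <= N)%nat -> (j' <= N)%nat ->
     (i' <= i + 1)%nat -> (i <= i' + 1)%nat -> (j' <= j + 1)%nat -> (j <= j' + 1)%nat ->
     oppb (q (P i j)) (q (P i' j')) = false) ->
  (forall j, (j <= N)%nat -> fst (P O j) < 0) -> (forall j, (j <= N)%nat -> 0 < fst (P N j)) ->
  (forall i, (i <= N)%nat -> 0 < snd (P i O)) -> (forall i, (i <= N)%nat -> snd (P i N) < 0) ->
  False.
Proof.
  intros HN Hno HL HR HB HT.
  set (Qp := fun i j => q (P i j)).
  set (H := fun i j => dq (Qp i j) (Qp (S i) j)).
  set (V := fun i j => dq (Qp i j) (Qp i (S j))).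
  set (T := fun j => zsum N (fun i => H i j)).
  assert (Hcell : forall i j, (i < N)%nat -> (j < N)%nat -> (H i j + V (S i) j = V i j + H i (S j))%Z).
  { intros i j Hi Hj. unfold H, V, Qp. apply cell; apply Hno; lia. }
  assert (Hrow : forall j, (j < N)%nat -> T (S j) = (T j + V N j - V O j)%Z).
  { intros j Hj.
    assert (E : zsum N (fun i => (H i j + V (S i) j)%Z) = zsum N (fun i => (V i j + H i (S j))%Z)).
    { apply zsum_ext. intros; apply Hcell; lia. }
    rewrite !zsum_plus in E. rewrite (zsum_shift N (fun i => V i j)) in E.
    unfold T. lia. }
  assert (Hall : forall m, (m <= N)%nat ->
    T m = (T O + zsum m (fun j => V N j) - zsum m (fun j => V O j))%Z).
  { induction m as [|m IH]; intros Hm; simpl; [lia|]. rewrite Hrow by lia. rewrite IH by lia. lia. }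
  assert (T0 : T O = (-1)%Z).
  { unfold T, H. rewrite (side_sum N (fun i => Qp i O)
       (fun a => match a with Q1 => 1%Z | _ => 0%Z end) Q0 Q1).
    - unfold Qp. rewrite (proj1 (proj2 (q_corner (P N O)))) by (first [apply HL|apply HR|apply HB|apply HT]; lia).
      rewrite (proj1 (q_corner (P O O))) by (first [apply HL|apply HR|apply HB|apply HT]; lia). reflexivity.
    - intros i Hi. apply q_side; first [apply HL|apply HR|apply HB|apply HT]; lia.
    - intros a b [-> | ->] [-> | ->]; reflexivity. }
  assert (TN : T N = 1%Z).
  { unfold T, H. rewrite (side_sum N (fun i => Qp i N)
       (fun a => match a with Q3 => 1%Z | _ => 0%Z end) Q2 Q3).
    - unfold Qp. rewrite (proj2 (proj2 (proj2 (q_corner (P N N))))) by (first [apply HL|apply HR|apply HB|apply HT]; lia).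
      rewrite (proj1 (proj2 (proj2 (q_corner (P O N))))) by (first [apply HL|apply HR|apply HB|apply HT]; lia). reflexivity.
    - intros i Hi. apply q_side; first [apply HL|apply HR|apply HB|apply HT]; lia.
    - intros a b [-> | ->] [-> | ->]; reflexivity. }
  assert (VR : zsum N (fun j => V N j) = (-1)%Z).
  { unfold V. rewrite (side_sum N (fun j => Qp N j)
       (fun a => match a with Q3 => (-1)%Z | _ => 0%Z end) Q0 Q3).
    - unfold Qp. rewrite (proj2 (proj2 (proj2 (q_corner (P N N))))) by (first [apply HL|apply HR|apply HB|apply HT]; lia).
      rewrite (proj1 (proj2 (q_corner (P N O)))) by (first [apply HL|apply HR|apply HB|apply HT]; lia). reflexivity.
    - intros j Hj. apply q_side; first [apply HL|apply HR|apply HB|apply HT]; lia.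
    - intros a b [-> | ->] [-> | ->]; reflexivity. }
  assert (VL : zsum N (fun j => V O j) = 1%Z).
  { unfold V. rewrite (side_sum N (fun j => Qp O j)
       (fun a => match a with Q2 => 1%Z | _ => 0%Z end) Q1 Q2).
    - unfold Qp. rewrite (proj1 (proj2 (proj2 (q_corner (P O N))))) by (first [apply HL|apply HR|apply HB|apply HT]; lia).
      rewrite (proj1 (q_corner (P O O))) by (first [apply HL|apply HR|apply HB|apply HT]; lia). reflexivity.
    - intros j Hj. apply q_side; first [apply HL|apply HR|apply HB|apply HT]; lia.
    - intros a b [-> | ->] [-> | ->]; reflexivity. }
  pose proof (Hall N (le_n N)). lia.
Qed.

Definition fstar (x : R) : R * R :=
  (-1 + 6 * x - 9 * relu (x - 1/3) + 3 * relu (x - 2/3),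
   -3 * relu (x - 1/3) + 9 * relu (x - 2/3)).

Lemma fstar_cont : continuous_on01 fstar.
Proof.
  intros x _ eps Heps. exists (eps / 18). split; [lra|]. intros y _ Hy.
  pose proof (relu_lip (y - 1/3) (x - 1/3)) as R1. pose proof (relu_lip (y - 2/3) (x - 2/3)) as R2.
  replace (y - 1/3 - (x - 1/3)) with (y - x) in R1 by ring.
  replace (y - 2/3 - (x - 2/3)) with (y - x) in R2 by ring.
  apply Rabs_le_inv in R1. apply Rabs_le_inv in R2.
  pose proof (Rle_abs (y - x)). pose proof (Rle_abs (- (y - x))). rewrite Rabs_Ropp in H0.
  unfold norm_inf, vsub, fstar; simpl. apply Rmax_lub_lt; apply Rabs_def1; lra.
Qed.

Lemma fstar_left s : 0 <= s <= 1/3 -> fstar s = (-1 + 6 * s, 0).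
Proof. intros H. unfold fstar. rewrite !relu_neg by lra. f_equal; ring. Qed.
Lemma fstar_right t : 2/3 <= t <= 1 -> fstar t = (0, 6 * t - 5).
Proof. intros H. unfold fstar. rewrite !relu_pos by lra. f_equal; lra. Qed.

Lemma norm_sub_chain a b c : norm_inf (vsub a c) <= norm_inf (vsub a b) + norm_inf (vsub b c).
Proof.
  replace (vsub a c) with (vadd (vsub a b) (vsub b c)) by (unfold vadd, vsub; simpl; f_equal; ring).
  apply norm_triang.
Qed.

Lemma crossing (g : R -> R * R) k L : 0 < k ->
  (forall x, in01 x -> norm_inf (vsub (g x) (fstar x)) <= 1/5) ->
  (forall x y, in01 x -> in01 y -> k * Rabs (x - y) <= norm_inf (vsub (g x) (g y)) /\
      norm_inf (vsub (g x) (g y)) <= L * Rabs (x - y)) -> False.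
Proof.
  intros Hk Hg Hb.
  assert (HL : k <= L).
  { destruct (Hb 0 1) as [A B]; try (unfold in01; lra).
    replace (Rabs (0 - 1)) with 1 in A, B by (rewrite Rabs_minus_sym, Rminus_0_r, Rabs_R1; reflexivity). lra. }
  destruct (INR_unbounded (Rmax 1 (2 * L / k))) as [N HN].
  pose proof (Rmax_l 1 (2 * L / k)). pose proof (Rmax_r 1 (2 * L / k)).
  assert (HN1 : (1 <= N)%nat) by (destruct N; [simpl in HN; lra|lia]).
  assert (HNp : 0 < INR N) by lra.
  set (s := fun i => INR i / (3 * INR N)). set (t := fun j => 2/3 + INR j / (3 * INR N)).
  assert (Hs : forall i, (i <= N)%nat -> 0 <= s i <= 1/3).
  { intros i Hi. unfold s. apply le_INR in Hi. pose proof (pos_INR i). split.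
    - unfold Rdiv. apply Rmult_le_pos; [lra|left; apply Rinv_0_lt_compat; lra].
    - apply (Rmult_le_reg_r (3 * INR N)); [lra|]. field_simplify; lra. }
  assert (Ht : forall j, (j <= N)%nat -> 2/3 <= t j <= 1).
  { intros j Hj. unfold t. pose proof (Hs j Hj). unfold s in H1. lra. }
  assert (Hstep : forall i i', (i' <= i + 1)%nat -> (i <= i' + 1)%nat ->
      Rabs (INR i / (3 * INR N) - INR i' / (3 * INR N)) <= 1 / (3 * INR N)).
  { intros i i' H1 H2. apply le_INR in H1. apply le_INR in H2. rewrite plus_INR in H1, H2. simpl in H1, H2.
    replace (INR i / (3 * INR N) - INR i' / (3 * INR N)) with ((INR i - INR i') * / (3 * INR N)) by (field; lra).
    rewrite Rabs_mult, (Rabs_pos_eq (/ _)) by (left; apply Rinv_0_lt_compat; lra).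
    unfold Rdiv. rewrite Rmult_1_l. rewrite <- (Rmult_1_l (/ (3 * INR N))) at 2.
    apply Rmult_le_compat_r; [left; apply Rinv_0_lt_compat; lra|].
    apply Rabs_le; lra. }
  set (P := fun i j => vsub (g (s i)) (g (t j))).
  set (m := k / 3).
  assert (Hlow : forall i j, (i <= N)%nat -> (j <= N)%nat -> m <= norm_inf (P i j)).
  { intros i j Hi Hj. destruct (Hb (s i) (t j)) as [A _]; try (unfold in01; pose proof (Hs i Hi); pose proof (Ht j Hj); lra).
    pose proof (Hs i Hi); pose proof (Ht j Hj).
    rewrite Rabs_minus_sym, Rabs_pos_eq in A by lra. unfold P, m. nra. }
  assert (Hadj : forall i j i' j', (i <= N)%nat -> (j <= N)%nat -> (i' <= N)%nat -> (j' <= N)%nat ->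
     (i' <= i + 1)%nat -> (i <= i' + 1)%nat -> (j' <= j + 1)%nat -> (j <= j' + 1)%nat ->
     norm_inf (vsub (P i j) (P i' j')) < m).
  { intros i j i' j' Hi Hj Hi' Hj' H1 H2 H3 H4.
    replace (vsub (P i j) (P i' j')) with (vsub (vsub (g (s i)) (g (s i'))) (vsub (g (t j)) (g (t j'))))
      by (unfold P, vsub; simpl; f_equal; ring).
    eapply Rle_lt_trans; [apply norm_sub_triang|].
    destruct (Hb (s i) (s i')) as [_ B1]; try (unfold in01; pose proof (Hs i Hi); pose proof (Hs i' Hi'); lra).
    destruct (Hb (t j) (t j')) as [_ B2]; try (unfold in01; pose proof (Ht j Hj); pose proof (Ht j' Hj'); lra).
    pose proof (Hstep i i' H1 H2). pose proof (Hstep j j' H3 H4).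
    replace (t j - t j') with (INR j / (3 * INR N) - INR j' / (3 * INR N)) in B2 by (unfold t; ring).
    unfold s in B1 |- *.
    assert (L * Rabs (INR i / (3 * INR N) - INR i' / (3 * INR N)) <= L * (1 / (3 * INR N))) by (apply Rmult_le_compat_l; lra).
    assert (L * Rabs (INR j / (3 * INR N) - INR j' / (3 * INR N)) <= L * (1 / (3 * INR N))) by (apply Rmult_le_compat_l; lra).
    assert (E : 2 * (L * (1 / (3 * INR N))) < m).
    { unfold m. apply (Rmult_lt_reg_r (3 * INR N)); [lra|]. field_simplify; [|lra].
      assert (2 * L < k * INR N).
      { assert (QQ : 2 * L / k < INR N) by lra.
        apply (Rmult_lt_compat_l k) in QQ; [|lra]. unfold Rdiv in QQ.
        rewrite <- Rmult_assoc, (Rmult_comm k), Rmult_assoc, Rinv_r, Rmult_1_r in QQ by lra. lra. }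
      lra. }
    lra. }
  assert (Hg0 := Hg 0 ltac:(unfold in01; lra)). rewrite fstar_left in Hg0 by lra.
  assert (Hg3 := Hg (1/3) ltac:(unfold in01; lra)). rewrite fstar_left in Hg3 by lra.
  assert (Hg23 := Hg (2/3) ltac:(unfold in01; lra)). rewrite fstar_right in Hg23 by lra.
  assert (Hg1 := Hg 1 ltac:(unfold in01; lra)). rewrite fstar_right in Hg1 by lra.
  assert (Hgl : forall x, 0 <= x <= 1/3 -> Rabs (snd (g x)) <= 1/5).
  { intros x Hx. pose proof (Hg x ltac:(unfold in01; lra)). rewrite fstar_left in H1 by lra.
    pose proof (norm_snd (vsub (g x) (-1 + 6 * x, 0))). simpl in H2. rewrite Rminus_0_r in H2. lra. }
  assert (Hgr : forall x, 2/3 <= x <= 1 -> Rabs (fst (g x)) <= 1/5).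
  { intros x Hx. pose proof (Hg x ltac:(unfold in01; lra)). rewrite fstar_right in H1 by lra.
    pose proof (norm_fst (vsub (g x) (0, 6 * x - 5))). simpl in H2. rewrite Rminus_0_r in H2. lra. }
  pose proof (norm_fst (vsub (g 0) (-1 + 6 * 0, 0))) as F0. simpl in F0.
  pose proof (norm_fst (vsub (g (1/3)) (-1 + 6 * (1/3), 0))) as F3. simpl in F3.
  pose proof (norm_snd (vsub (g (2/3)) (0, 6 * (2/3) - 5))) as S23. simpl in S23.
  pose proof (norm_snd (vsub (g 1) (0, 6 * 1 - 5))) as S1. simpl in S1.
  apply (discrete N P HN1).
  - intros i j i' j' Hi Hj Hi' Hj' H1 H2 H3 H4. apply (nonopp m).
    + apply Hadj; assumption.
    + apply Hlow; assumption.
  - intros j Hj. unfold P, vsub; simpl. replace (s O) with 0 by (unfold s; simpl; field; lra).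
    pose proof (Hgr (t j) (Ht j Hj)). apply Rabs_le_inv in H1.
    assert (Rabs (fst (g 0) - (-1 + 6 * 0)) <= 1/5) by lra. apply Rabs_le_inv in H2. lra.
  - intros j Hj. unfold P, vsub; simpl. replace (s N) with (1/3) by (unfold s; field; lra).
    pose proof (Hgr (t j) (Ht j Hj)). apply Rabs_le_inv in H1.
    assert (Rabs (fst (g (1/3)) - (-1 + 6 * (1/3))) <= 1/5) by lra. apply Rabs_le_inv in H2. lra.
  - intros i Hi. unfold P, vsub; simpl. replace (t O) with (2/3) by (unfold t; simpl; field; lra).
    pose proof (Hgl (s i) (Hs i Hi)). apply Rabs_le_inv in H1.
    assert (Rabs (snd (g (2/3)) - (6 * (2/3) - 5)) <= 1/5) by lra. apply Rabs_le_inv in H2. lra.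
  - intros i Hi. unfold P, vsub; simpl. replace (t N) with 1 by (unfold t; field; lra).
    pose proof (Hgl (s i) (Hs i Hi)). apply Rabs_le_inv in H1.
    assert (Rabs (snd (g 1) - (6 * 1 - 5)) <= 1/5) by lra. apply Rabs_le_inv in H2. lra.
Qed.

Lemma lower w : dense_width w -> (3 <= w)%nat.
Proof.
  intros H. destruct (le_lt_dec 3 w) as [|Hlt]; [assumption|exfalso].
  destruct (H fstar fstar_cont (1/10) ltac:(lra)) as [ls [Hls [Hw Happ]]].
  destruct (net_chain ls Hls ltac:(lia)) as [c [e [Ms Hf]]].
  set (R0 := norm_inf c + norm_inf e).
  destruct (chain_approx Ms R0 (1/10) ltac:(lra)) as [th [Hth Happ2]].
  destruct (perturb Ms th ltac:(lra)) as [Ms' [Hc Hinv]].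
  assert (Hc' : exists c', 0 < norm_inf c' /\ norm_inf (vsub c c') <= th).
  { destruct (Req_dec (norm_inf c) 0) as [E|E].
    - exists (fst c + th, snd c + th).
      pose proof (norm_fst c); pose proof (norm_snd c).
      assert (fst c = 0) by (apply abs0; pose proof (Rabs_pos (fst c)); lra).
      assert (snd c = 0) by (apply abs0; pose proof (Rabs_pos (snd c)); lra).
      unfold norm_inf, vsub; simpl. rewrite H2, H3. rewrite !Rplus_0_l.
      replace (0 - th) with (- th) by ring. rewrite Rabs_Ropp, Rabs_pos_eq by lra.
      rewrite Rmax_left by lra. lra.
    - exists c. pose proof (norm_ge0 c). split; [lra|].
      unfold norm_inf, vsub; simpl. rewrite !Rminus_diag, Rabs_R0, Rmax_left; lra. }
  destruct Hc' as [c' [Hc'0 Hc'1]].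
  set (v := fun x => (fst c' * x + fst e, snd c' * x + snd e)).
  set (g := fun x => chain th Ms' (v x)).
  destruct (chain_bilip th Ms' ltac:(lra) Hinv) as [k [L [Hk [HL Hbl]]]].
  apply (crossing g (k * norm_inf c') (L * norm_inf c')).
  - apply Rmult_lt_0_compat; lra.
  - intros x Hx. unfold in01 in Hx.
    assert (A1 := Happ x Hx). rewrite Hf in A1.
    assert (A2 : norm_inf (vsub (chain 0 Ms (fst c * x + fst e, snd c * x + snd e)) (g x)) <= 1/10).
    { apply Happ2; [lra|exact Hc| |].
      - pose proof (norm_fst c); pose proof (norm_snd c); pose proof (norm_fst e); pose proof (norm_snd e).
        apply norm_le; simpl; (eapply Rle_trans; [apply Rabs_triang|]); rewrite Rabs_mult;
        rewrite (Rabs_pos_eq x) by lra; unfold R0; pose proof (Rabs_pos (fst c)); pose proof (Rabs_pos (snd c)); nra.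
      - unfold v. pose proof (norm_fst (vsub c c')); pose proof (norm_snd (vsub c c')).
        simpl in *. apply norm_le; simpl.
        + replace (fst c * x + fst e - (fst c' * x + fst e)) with ((fst c - fst c') * x) by ring.
          rewrite Rabs_mult, (Rabs_pos_eq x) by lra. pose proof (Rabs_pos (fst c - fst c')). nra.
        + replace (snd c * x + snd e - (snd c' * x + snd e)) with ((snd c - snd c') * x) by ring.
          rewrite Rabs_mult, (Rabs_pos_eq x) by lra. pose proof (Rabs_pos (snd c - snd c')). nra. }
    rewrite norm_sub_sym in A1.
    pose proof (norm_sub_chain (g x) (chain 0 Ms (fst c * x + fst e, snd c * x + snd e)) (fstar x)).
    rewrite norm_sub_sym in A2. lra.
  - intros x y _ _. destruct (Hbl (v x) (v y)) as [B1 B2].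
    assert (E : norm_inf (vsub (v x) (v y)) = norm_inf c' * Rabs (x - y)).
    { unfold v, vsub, norm_inf; simpl.
      replace (fst c' * x + fst e - (fst c' * y + fst e)) with (fst c' * (x - y)) by ring.
      replace (snd c' * x + snd e - (snd c' * y + snd e)) with (snd c' * (x - y)) by ring.
      rewrite !Rabs_mult. unfold Rmax. destruct Rle_dec, Rle_dec; try reflexivity;
      pose proof (Rabs_pos (x - y)); nra. }
    rewrite E in B1, B2. unfold g. split; lra.
Qed.


Theorem theorem2 (w : nat) : dense_width w <-> (3 <= w)%nat.
Proof.
  split; [apply lower|apply upper].
Qed.
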